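(* Let $k\le n$ be a positive integer and $\epsilon\in(0,1)$. Suppose $f:2^E\times O^E\to\mathbb{R}_{\ge0}$ is worst-case monotone and worst-case submodular with respect to $p(\phi)$ and satisfies minimal dependency. Let $\pi^f$ be the adaptive stochastic worst-case greedy policy with parameters $k,\epsilon$, and let $\pi^*_{wc}$ maximize $f_{wc}(\pi)$ over all deterministic policies $\pi$ with $|E(\pi,\phi)|\le k$ for all $\phi\in U^+$. Then $$\tilde f_{wc}(\pi^f)\ \ge\ \Big(1-\frac1e-\epsilon\Big)f_{wc}(\pi^*_{wc}),$$ and $\pi^f$ performs a total of $O(n\log(1/\epsilon))$ evaluations of worst-case marginal utilities $f_{wc}(e\mid\psi)$.
   Context: Setting. $E$ is a finite set of $n$ items and $O$ a finite set of states. A realization is a function $\phi:E\to O$; $p$ is a probability distribution (prior) on the set of all realizations, $\Phi$ denotes a random realization with law $p$, and $U^+=\{\phi: p(\phi)>0\}$. A partial realization is a function $\psi:S\to O$ with $S\subseteq E$, $\mathrm{dom}(\psi)=S$; it is identified with the set of pairs $\{(e,\psi(e)):e\in S\}$, so $\psi\subseteq\psi'$ means $\mathrm{dom}(\psi)\subseteq\mathrm{dom}(\psi')$ and they agree on $\mathrm{dom}(\psi)$. A realization $\phi$ is consistent with $\psi$, written $\phi\sim\psi$, if it agrees with $\psi$ on $\mathrm{dom}(\psi)$. Only partial realizations with $\Pr[\Phi\sim\psi]>0$ are considered, and $p(\phi\mid\psi)=\Pr[\Phi=\phi\mid\Phi\sim\psi]$. For $S\subseteq E$ and a partial realization $\psi$,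 $f(S,\psi)=\mathbb{E}[f(S,\Phi)\mid\Phi\sim\psi]$. For $e\notin\mathrm{dom}(\psi)$, let $O(e,\psi)=\{o\in O:\exists\phi\text{ with }p(\phi\mid\psi)>0,\ \phi(e)=o\}$ and define the worst-case marginal utility $f_{wc}(e\mid\psi)=\min_{o\in O(e,\psi)}\{f(\mathrm{dom}(\psi)\cup\{e\},\psi\cup\{(e,o)\})-f(\mathrm{dom}(\psi),\psi)\}$. $f$ is worst-case submodular if $f_{wc}(e\mid\psi)\ge f_{wc}(e\mid\psi')$ for all partial realizations $\psi\subseteq\psi'$ and all $e\in E\setminus\mathrm{dom}(\psi')$; it is worst-case monotone if $f_{wc}(e\mid\psi)\ge0$ for all $\psi$ and $e\notin\mathrm{dom}(\psi)$. $f$ satisfies minimal dependency if $f(\mathrm{dom}(\psi),\psi)=f(\mathrm{dom}(\psi),\phi)$ for every partial realization $\psi$ and every $\phi\in U^+$ with $\phi\sim\psi$. Policies. A (deterministic) policy $\pi$ is a rule which, given the current observation (the partial realization of the items selected so far), either selects a new item or stops; after an item $e$ is selected under realization $\phi$, the state $\phi(e)$ is observed. A randomized policy may additionally use internal randomness independent of $\Phi$. $E(\pi,\phi)$ is the (possibly random) set of items selected by $\pi$ under $\phi$. For deterministic $\pi$, $f_{wc}(\pi)=\min_{\phi\in U^+}f(E(\pi,\phi),\phi)$; for a randomized policy the expected worst-case utility is $\tilde f_{wc}(\pi)=\min_{\phi\in U^+}\mathbb{E}[f(E(\pi,\phi),\phi)]$, the expectation over the policy's internal randomness. Adaptive stochastic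 worst-case greedy policy $\pi^f$: let $s=\lceil\frac nk\ln\frac1\epsilon\rceil$. Start with $\psi_0=\emptyset$; for $t=1,\dots,k$, draw a set $H$ uniformly at random among subsets of $E\setminus\mathrm{dom}(\psi_{t-1})$ of size $\min\{s,n-t+1\}$ (independently of everything else), select $e_t\in\arg\max_{e\in H}f_{wc}(e\mid\psi_{t-1})$, observe $\Phi(e_t)$, and set $\psi_t=\psi_{t-1}\cup\{(e_t,\Phi(e_t))\}$. *)

(* Defs.v *)
From HB Require Import structures.
From mathcomp Require Import all_boot all_order all_algebra.
From mathcomp Require Import all_classical all_reals all_analysis.
Set Implicit Arguments. Unset Strict Implicit. Unset Printing Implicit Defensive.
Import Order.TTheory GRing.Theory Num.Theory.
Local Open Scope ring_scope.

Section AdaptiveWC.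
Variables (R : realType) (E O : finType).
Variable p : {ffun E -> O} -> R.
Variable f : {set E} -> {ffun E -> O} -> R.

(* partial realizations: psi e = Some o iff e in dom psi and psi(e) = o *)
Definition dom (psi : {ffun E -> option O}) : {set E} := [set e | psi e != None].

Definition consistent (phi : {ffun E -> O}) (psi : {ffun E -> option O}) : bool :=
  [forall e, (psi e == None) || (psi e == Some (phi e))].

Definition prob (psi : {ffun E -> option O}) : R :=
  \sum_(phi | consistent phi psi) p phi.

Definition fpart (S : {set E}) (psi : {ffun E -> option O}) : R :=
  (\sum_(phi | consistent phi psi) p phi * f S phi) / prob psi.

Definition extend (psi : {ffun E -> option O}) (e : E) (o : O) : {ffun E -> option O} :=
  [ffun x => if x == e then Some o else psi x].

Definition subpart (psi psi' : {ffun E -> option O}) : bool :=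
  [forall e, (psi e == None) || (psi' e == psi e)].

(* O(e, psi): p(phi | psi) > 0 iff p phi > 0 and phi ~ psi (when Pr[psi] > 0) *)
Definition outcomes (e : E) (psi : {ffun E -> option O}) : {set O} :=
  [set o | [exists phi, [&& 0 < p phi, consistent phi psi & phi e == o]]].

Definition marg (e : E) (psi : {ffun E -> option O}) (o : O) : R :=
  fpart (e |: dom psi) (extend psi e o) - fpart (dom psi) psi.

(* worst-case marginal utility f_wc(e | psi) (min over the nonempty set O(e,psi);
   the default 0 is never used for positive-probability psi) *)
Definition fwc (e : E) (psi : {ffun E -> option O}) : R :=
  match [pick o in outcomes e psi] with
  | Some o0 => \big[Num.min/marg e psi o0]_(o in outcomes e psi) marg e psi o
  | None => 0
  end.

Definition wc_submodular : Prop :=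
  forall psi psi' : {ffun E -> option O}, 0 < prob psi -> 0 < prob psi' ->
    subpart psi psi' -> forall e, e \notin dom psi' -> fwc e psi' <= fwc e psi.

Definition wc_monotone : Prop :=
  forall psi : {ffun E -> option O}, 0 < prob psi ->
    forall e, e \notin dom psi -> 0 <= fwc e psi.

Definition minimal_dependency : Prop :=
  forall psi : {ffun E -> option O}, 0 < prob psi ->
    forall phi, 0 < p phi -> consistent phi psi -> fpart (dom psi) psi = f (dom psi) phi.

Definition Uplus : {set {ffun E -> O}} := [set phi | 0 < p phi].

Definition min_Uplus (g : {ffun E -> O} -> R) : R :=
  match [pick phi in Uplus] with
  | Some phi0 => \big[Num.min/g phi0]_(phi in Uplus) g phi
  | None => 0
  end.

(* deterministic policy: given the current observation, select an item or stop
   (re-selecting an already selected item has no effect, i.e. amounts to stopping) *)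
Definition policy := {ffun E -> option O} -> option E.

Definition pstep (pi : policy) (phi : {ffun E -> O}) (psi : {ffun E -> option O}) :=
  match pi psi with
  | Some e => if psi e == None then extend psi e (phi e) else psi
  | None => psi
  end.

(* at most #|E| items can ever be selected *)
Definition run (pi : policy) (phi : {ffun E -> O}) : {ffun E -> option O} :=
  iter #|E| (pstep pi phi) [ffun=> None].

Definition sel_items (pi : policy) (phi : {ffun E -> O}) : {set E} := dom (run pi phi).

Definition fwc_policy (pi : policy) : R := min_Uplus (fun phi => f (sel_items pi phi) phi).

Definition sample_size (k : nat) (eps : R) : nat :=
  `|Num.ceil (#|E|%:R / k%:R * ln (eps^-1))|%N.

Definition candidates (psi : {ffun E -> option O}) (m : nat) : {set {set E}} :=
  [set H : {set E} | (H \subset ~: dom psi) && (#|H| == m)].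

Definition wc_argmax_rule (sel : {ffun E -> option O} -> {set E} -> E) : Prop :=
  forall psi (H : {set E}), 0 < prob psi -> (0 < #|H|)%N ->
    sel psi H \in H /\ forall e, e \in H -> fwc e psi <= fwc (sel psi H) psi.

(* expected (over the random sets H) utility f(E(pi^f, phi), phi) obtained when
   r steps remain, the current step is t (1-indexed) and the observation is psi;
   H is uniform among the subsets of E \ dom psi of size min(s, n - t + 1) *)
Fixpoint greedy_val (sel : {ffun E -> option O} -> {set E} -> E) (s : nat)
    (phi : {ffun E -> O}) (r t : nat) (psi : {ffun E -> option O}) : R :=
  match r with
  | 0 => f (dom psi) phi
  | r'.+1 =>
      let Hs := candidates psi (minn s (#|E| + 1 - t)) in
      (#|Hs|%:R)^-1 *
        \sum_(H in Hs) greedy_val sel s phi r' t.+1 (extend psi (sel psi H) (phi (sel psi H)))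
  end.

Definition greedy_fwc (sel : {ffun E -> option O} -> {set E} -> E) (k : nat) (eps : R) : R :=
  min_Uplus (fun phi => greedy_val sel (sample_size k eps) phi k 1 [ffun=> None]).

Definition greedy_evals (k : nat) (eps : R) : nat :=
  \sum_(1 <= t < k.+1) minn (sample_size k eps) (#|E| + 1 - t).

End AdaptiveWC.

(* Main.v *)
Require Import Defs.
From HB Require Import structures.
From mathcomp Require Import all_boot all_order all_algebra.
From mathcomp Require Import all_classical all_reals all_analysis.
Import Order.TTheory GRing.Theory Num.Theory.
Local Open Scope ring_scope.

From mathcomp Require Import fintype finset.
From mathcomp Require Import ring lra zify.
Set Implicit Arguments. Unset Strict Implicit. Unset Printing Implicit Defensive.

Lemma ff_step (a b h : nat) : (a <= b)%N -> ((a - h) * b <= (b - h) * a)%N.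
Proof. move=> ab; nia. Qed.

Lemma ff_le (a b h : nat) : (a <= b)%N -> (a ^_ h * b ^ h <= b ^_ h * a ^ h)%N.
Proof.
move=> ab; elim: h => [|h IH]; first by rewrite !ffactn0 !expn0.
rewrite !ffactnSr !expnS.
have := leq_mul IH (ff_step h ab).
have -> : (a ^_ h * b ^ h * ((a - h) * b) = a ^_ h * (a - h) * (b * b ^ h))%N by ring.
by have -> : (b ^_ h * a ^ h * ((b - h) * a) = b ^_ h * (b - h) * (a * a ^ h))%N by ring.
Qed.

Lemma bin_ratio (a b h : nat) : (a <= b)%N -> ('C(a, h) * b ^ h <= 'C(b, h) * a ^ h)%N.
Proof.
move=> ab; have := ff_le h ab; rewrite -!bin_ffact.
rewrite [('C(a,h) * _ * _)%N]mulnAC [('C(b,h) * _ * _)%N]mulnAC.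
by rewrite leq_pmul2r ?fact_gt0.
Qed.

Section Geo.
Variable R : realType.

Lemma geo (x y : R) (s : nat) : 0 <= x -> x <= y -> y <= 1 ->
  x * (1 - (1 - y) ^+ s) <= y * (1 - (1 - x) ^+ s).
Proof.
move=> x0 xy y1; elim: s => [|s IH]; first by rewrite !expr0 !subrr !mulr0.
have ax : 0 <= 1 - (1 - x) ^+ s by rewrite subr_ge0 exprn_ile1 //; lra.
have e z : 1 - (1 - z) ^+ s.+1 = z + (1 - z) * (1 - (1 - z) ^+ s) :> R.
  by rewrite exprS; ring.
rewrite !e.
have h1 : x * ((1 - y) * (1 - (1 - y) ^+ s)) <= (1 - y) * (y * (1 - (1 - x) ^+ s)).
  rewrite mulrCA; apply: ler_wpM2l => //; lra.
have h2 : (1 - y) * (y * (1 - (1 - x) ^+ s)) <= y * ((1 - x) * (1 - (1 - x) ^+ s)).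
  rewrite mulrCA; apply: ler_wpM2l; first lra.
  apply: ler_wpM2r => //; lra.
have := le_trans h1 h2; rewrite !mulrDr; lra.
Qed.


Lemma prob_bound (eps : R) (m s k i : nat) : (0 < s)%N -> (0 < k)%N -> (0 < i)%N ->
  (i <= k)%N -> (i <= m)%N -> 0 < eps <= 1 ->
  ((k <= m)%N -> (s < m)%N -> (1 - k%:R / m%:R) ^+ s <= eps) ->
  (1 - eps) / k%:R * i%:R * ('C(m, minn s m))%:R <=
    ('C(m, minn s m))%:R - ('C(m - i, minn s m))%:R.
Proof.
move=> s0 k0 i0 ik im /andP[e0 e1] hs.
have kR : 0 < k%:R :> R by rewrite ltr0n.
have iR : 0 < i%:R :> R by rewrite ltr0n.
have ikR : i%:R <= k%:R :> R by rewrite ler_nat.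
have m0 : (0 < m)%N by apply: leq_trans im.
have mR : 0 < m%:R :> R by rewrite ltr0n.
have cle : (1 - eps) / k%:R * i%:R <= 1.
  rewrite mulrAC ler_pdivrMr // mul1r; apply: le_trans ikR; rewrite ler_piMl //; lra.
have cge : 0 <= (1 - eps) / k%:R * i%:R.
  by apply: mulr_ge0 => //; apply: divr_ge0; lra.
case: (leqP m s) => hsm.
  rewrite (@bin_small (m - i) m) ?subr0; first by apply: ler_piMl.
  by rewrite ltn_subrL i0 m0.
set C := ('C(m, s))%:R : R; set C' := ('C(m - i, s))%:R : R.
have C0 : 0 <= C by rewrite ler0n.
have hr : C' * m%:R ^+ s <= C * (m - i)%:R ^+ s.
  by rewrite -!natrX -!natrM ler_nat; apply: bin_ratio; apply: leq_subr.
set x := i%:R / m%:R : R.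
have mi : (m - i)%:R / m%:R = 1 - x by rewrite natrB // mulrBl divff ?gt_eqF.
have hC' : C' <= C * (1 - x) ^+ s.
  rewrite -mi expr_div_n mulrA ler_pdivlMr ?exprn_gt0 //.
set K := minn k m.
have K0 : (0 < K)%N by rewrite leq_min k0 m0.
have KR : 0 < K%:R :> R by rewrite ltr0n.
have iK : i%:R <= K%:R :> R by rewrite ler_nat leq_min ik im.
have Km : K%:R <= m%:R :> R by rewrite ler_nat geq_minr.
have Kk : K%:R <= k%:R :> R by rewrite ler_nat geq_minl.
set y := K%:R / m%:R : R.
have x0 : 0 <= x by apply: divr_ge0; apply: ltW.
have xy : x <= y by apply: ler_pM => //; apply: ltW.
have y1 : y <= 1 by rewrite ler_pdivrMr // mul1r.
have hy : (1 - y) ^+ s <= eps.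
  rewrite /y /K; case: (leqP k m) => hkm; first by apply: hs.
  rewrite divff ?gt_eqF // subrr expr0n gt_eqF //; exact: ltW e0.
have g := geo s x0 xy y1.
have h1 : x * (1 - eps) <= y * (1 - (1 - x) ^+ s).
  apply: le_trans g; apply: ler_wpM2l => //; lra.
have h1' : i%:R * (1 - eps) <= K%:R * (1 - (1 - x) ^+ s).
  move: h1; rewrite /x /y [i%:R / _ * _]mulrAC [K%:R / _ * _]mulrAC ler_pM2r //.
  by rewrite invr_gt0.
have h2 : (1 - x) ^+ s <= 1 - (1 - eps) / k%:R * i%:R.
  have a1 : (1 - eps) / k%:R * i%:R <= (1 - eps) / K%:R * i%:R.
    apply: ler_wpM2r; first exact: ltW.
    apply: ler_wpM2l; first lra.
    by rewrite lef_pV2 ?posrE.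
  have a2 : (1 - eps) / K%:R * i%:R <= 1 - (1 - x) ^+ s.
    rewrite mulrAC ler_pdivrMr //; lra.
  lra.
have := ler_wpM2l C0 h2 => h3.
have := le_trans hC' h3; nra.
Qed.

End Geo.

Lemma cnt_cand (R : realType) (T : finType) (D B : {set T}) h : B \subset D ->
  (#|[set H in [set H : {set T} | (H \subset D) && (#|H| == h)] | H :&: B != set0]|)%:R =
  ('C(#|D|, h))%:R - ('C(#|D| - #|B|, h))%:R :> R.
Proof.
move=> sBD.
set X := [set H : {set T} | (H \subset D) && (#|H| == h)].
set P := [set H : {set T} | H :&: B == set0].
have hX : #|X| = 'C(#|D|, h) by rewrite -cards_draws.
have hZ : #|X :&: P| = 'C(#|D| - #|B|, h).
  have -> : X :&: P = [set H : {set T} | H \subset D :\: B & #|H| == h].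
    apply/setP => H; rewrite !inE subsetD setI_eq0.
    by case: (H \subset D); case: [disjoint H & B]; case: (#|H| == h).
  by rewrite cards_draws cardsD (setIidPr sBD).
have -> : [set H in X | H :&: B != set0] = X :\: P.
  by apply/setP => H; rewrite !inE andbC.
have := cardsID P X; rewrite hX hZ => <-.
by rewrite natrD addrC addKr.
Qed.

Section MaxLemma.
Variables (R : realType) (T : finType).
Variable Hs : {set {set T}}.
Variable c : R.
Hypothesis c_ge0 : 0 <= c.
Implicit Types (g : T -> R) (A B H : {set T}) (a x : T).

Definition mx (g : T -> R) (A H : {set T}) := \big[Num.max/0]_(e in H :&: A) g e.

Lemma mx_ge0 g A H : 0 <= mx g A H.
Proof. exact: bigmax_ge_id. Qed.

Lemma mx_ge g A H x : x \in H :&: A -> g x <= mx g A H.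
Proof. by move=> hx; apply: le_bigmax_cond. Qed.

Lemma mx_att g A H : mx g A H = 0 \/ exists2 x, x \in H :&: A & mx g A H = g x.
Proof.
rewrite /mx; elim/big_ind: _ => [|x y hx hy|x hx]; [by left| |by right; exists x].
rewrite /Num.max; case: ifP => _; [exact: hy|exact: hx].
Qed.

Lemma mx_step g A H a : a \in A -> (forall e, e \in A -> g a <= g e) -> (forall e, e \in A -> 0 <= g e) ->
  (if H :&: A != set0 then g a else 0) + mx (fun e => g e - g a) (A :\ a) H <= mx g A H.
Proof.
move=> aA amin g0.
have sub : H :&: (A :\ a) \subset H :&: A by apply: setIS; apply: subsetDl.
case: (mx_att (fun e => g e - g a) (A :\ a) H) => [->|[x hx ->]].
  rewrite addr0; case: (boolP (H :&: A != set0)) => [/set0Pn [y hy] | _]; last exact: mx_ge0.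
  apply: le_trans (mx_ge g hy).
  by apply: amin; move: hy; rewrite in_setI => /andP[].
have hxA : x \in H :&: A by apply: (fintype.subsetP sub).
have -> : H :&: A != set0 by apply/set0Pn; exists x.
by rewrite addrC subrK; apply: mx_ge.
Qed.


Definition cnt B := #|[set H in Hs | H :&: B != set0]|.

Lemma sum_if A (v : R) :
  \sum_(H in Hs) (if H :&: A != set0 then v else 0) = (cnt A)%:R * v.
Proof.
rewrite -big_mkcondr /= mulr_natl -sumr_const.
by apply: eq_bigl => H; rewrite inE.
Qed.

Lemma ML n : forall A, #|A| = n ->
  (forall B, B \subset A -> c * #|B|%:R * #|Hs|%:R <= (cnt B)%:R) ->
  forall g, (forall e, e \in A -> 0 <= g e) ->
  c * #|Hs|%:R * \sum_(e in A) g e <= \sum_(H in Hs) mx g A H.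
Proof.
elim: n => [|n IH] A hA hB g g0.
  have -> : A = set0 by apply/eqP; rewrite -cards_eq0 hA.
  rewrite big_set0 mulr0; apply: sumr_ge0 => H _; exact: mx_ge0.
have /set0Pn [a0 a0A] : A != set0 by rewrite -card_gt0 hA.
case: (Order.TotalTheory.arg_minP g a0A) => a aA amin.
have aA2 : a \in A by exact: aA.
set v := g a.
have v0 : 0 <= v by apply: g0.
have g0' : forall e, e \in A :\ a -> 0 <= g e - v.
  by move=> e; rewrite in_setD1 => /andP[_ eA]; rewrite subr_ge0; exact: amin.
have hA' : #|A :\ a| = n by have := cardsD1 a A; rewrite aA2 hA add1n => -[].
have hB' : forall B, B \subset A :\ a -> c * #|B|%:R * #|Hs|%:R <= (cnt B)%:R.
  by move=> B sB; apply: hB; apply: subset_trans sB (subsetDl _ _).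
have IH' := IH _ hA' hB' _ g0'.
have step : \sum_(H in Hs) ((if H :&: A != set0 then v else 0) +
      mx (fun e => g e - v) (A :\ a) H) <= \sum_(H in Hs) mx g A H.
  by apply: ler_sum => H _; apply: mx_step.
rewrite big_split /= sum_if in step.
have hcA := hB A (subxx _); rewrite hA in hcA.
rewrite sumrB sumr_const hA' in IH'.
rewrite (big_setD1 _ aA2) /=.
apply: le_trans step.
set S := \sum_(i in A :\ a) g i in IH' *.
set N := (#|Hs|%:R : R) in IH' hcA *.
set K := (cnt A)%:R in hcA *.
set M := \sum_(H in Hs) _ in IH' *.
have h1 : c * n.+1%:R * N * v <= K * v by apply: ler_wpM2r.
rewrite -mulr_natr in IH'.
have -> : c * N * (v + S) = c * n.+1%:R * N * v + c * N * (S - v * n%:R).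
  by rewrite -natr1; ring.
exact: lerD.
Qed.

End MaxLemma.

Section Analytic.
Variable R : realType.
Variables (n k : nat) (eps : R).
Hypothesis k0 : (0 < k)%N.
Hypothesis kn : (k <= n)%N.
Hypothesis e0 : 0 < eps.
Hypothesis e1 : eps < 1.

Definition L := ln (eps^-1).
Definition xs := n%:R / k%:R * L.
Definition ss := `|Num.ceil xs|%N.

Lemma L_gt0 : 0 < L.
Proof. by apply: ln_gt0; rewrite invf_gt1. Qed.

Lemma xs_gt0 : 0 < xs.
Proof.
apply: mulr_gt0; last exact: L_gt0.
by apply: divr_gt0; rewrite ltr0n //; apply: leq_trans kn.
Qed.

Lemma ss_R : ss%:R = (Num.ceil xs)%:~R :> R.
Proof.
rewrite /ss natr_absz ger0_norm //.
by rewrite ceil_ge0; apply: lt_trans xs_gt0; rewrite ltrN10.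
Qed.

Lemma ss_gt0 : (0 < ss)%N.
Proof.
rewrite -(ltr0n R) ss_R; apply: lt_le_trans xs_gt0 _; exact: ceil_ge.
Qed.

Lemma ss_ge : xs <= ss%:R.
Proof. rewrite ss_R; exact: ceil_ge. Qed.

Lemma ss_lt : ss%:R < xs + 1.
Proof.
have := ceilB1_lt xs; rewrite ss_R intrB /=; lra.
Qed.

Lemma pow_bound (m : nat) : (k <= m)%N -> (m <= n)%N ->
  (1 - k%:R / m%:R) ^+ ss <= eps.
Proof.
move=> km mn.
have m0 : (0 < m)%N by apply: leq_trans km.
have mR : 0 < m%:R :> R by rewrite ltr0n.
have kR : 0 < k%:R :> R by rewrite ltr0n.
have kmR : k%:R <= m%:R :> R by rewrite ler_nat.
have nR : 0 < n%:R :> R by rewrite ltr0n; apply: leq_trans kn.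
have mnR : m%:R <= n%:R :> R by rewrite ler_nat.
have a0 : 0 <= 1 - k%:R / m%:R :> R by rewrite subr_ge0 ler_pdivrMr // mul1r.
have a1 : 1 - k%:R / m%:R <= expR (- (k%:R / m%:R)) :> R by apply: expR_ge1Dx.
apply: le_trans (lerXn2r _ _ _ a1) _; rewrite ?nnegrE ?expR_ge0 //.
rewrite -expRM_natr.
have -> : eps = expR (- L) by rewrite /L lnV ?posrE ?invr_gt0 // opprK lnK ?posrE.
rewrite ler_expR mulNr lerN2.
have h1 : L <= k%:R / n%:R * ss%:R.
  have := ss_ge; rewrite /xs => h.
  have -> : L = k%:R / n%:R * (n%:R / k%:R * L).
    by field; apply/andP; split; rewrite gt_eqF.
  apply: ler_wpM2l h; apply: divr_ge0; exact: ltW.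
apply: le_trans h1 _; apply: ler_wpM2r; first by rewrite ler0n.
apply: ler_wpM2l; first exact: ltW.
by rewrite lef_pV2 ?posrE.
Qed.

Lemma final_bound : (1 - (1 - eps) / k%:R) ^+ k <= expR (-1) + eps.
Proof.
have e0' := e0; have e1' := e1.
have kR : 0 < k%:R :> R by rewrite ltr0n.
set x := (1 - eps) / k%:R.
have x1 : x <= 1.
  rewrite /x ler_pdivrMr // mul1r; apply: (@le_trans _ _ 1); first (rewrite lerBlDr lerDl; exact: ltW).
  by rewrite ler1n.
have a0 : 0 <= 1 - x by lra.
have a1 : 1 - x <= expR (- x) by apply: expR_ge1Dx.
apply: le_trans (lerXn2r _ _ _ a1) _; rewrite ?nnegrE ?expR_ge0 //.
rewrite -expRM_natr /x mulNr divfK ?gt_eqF // opprB.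
have b1 : 1 - eps <= expR (- eps) by apply: expR_ge1Dx.
have b2 : expR eps * (1 - eps) <= 1.
  by have := ler_wpM2l (expR_ge0 eps) b1; rewrite expRxMexpNx_1.
have b3 : expR (eps - 1) <= 1.
  have h : eps - 1 <= 0 :> R by lra.
  by rewrite expR_le1.
have b4 : expR (- 1) * expR eps = expR (eps - 1) by rewrite -expRD addrC.
have b5 : 0 <= expR (-1) :> R by apply: expR_ge0.
have c1 : expR (-1) * (expR eps - 1) <= expR (-1) * (eps * expR eps).
  by apply: ler_wpM2l => //; lra.
have c2 : expR (-1) * (eps * expR eps) = eps * expR (eps - 1).
  by rewrite mulrCA b4.
have c3 : eps * expR (eps - 1) <= eps by apply: ler_piMr => //; exact: ltW.
have c4 : expR (-1) * (expR eps - 1) = expR (eps - 1) - expR (-1).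
  by rewrite mulrBr mulr1 b4.
lra.
Qed.

End Analytic.

Section Basics.
Variables (R : realType) (E O : finType).
Variable p : {ffun E -> O} -> R.
Variable f : {set E} -> {ffun E -> O} -> R.
Implicit Types (phi : {ffun E -> O}) (psi J q : {ffun E -> option O}) (e : E) (o : O) (S T A B H : {set E}).
Hypothesis p_ge0 : forall phi, 0 <= p phi.
Hypothesis mono : wc_monotone p f.
Hypothesis subm : wc_submodular p f.
Hypothesis md : minimal_dependency p f.

Lemma prob_ge phi psi : consistent phi psi -> p phi <= prob p psi.
Proof.
move=> c; rewrite /prob (bigD1 phi) //=.
by rewrite lerDl sumr_ge0 // => x _.
Qed.

Lemma prob_gt0 phi psi : 0 < p phi -> consistent phi psi -> 0 < prob p psi.
Proof. by move=> h c; apply: lt_le_trans h (prob_ge c). Qed.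

Lemma outcomes_mem phi psi e : 0 < p phi -> consistent phi psi ->
  phi e \in outcomes p e psi.
Proof. by move=> h c; rewrite inE; apply/existsP; exists phi; rewrite h c eqxx. Qed.

Lemma fwc_le e psi o : o \in outcomes p e psi -> fwc p f e psi <= marg p f e psi o.
Proof.
move=> ho; rewrite /fwc; case: pickP; last by move=> H; move: (H o); rewrite ho. move=> o0 Ho0.
exact: bigmin_le_cond.
Qed.

Lemma fwc_attained e psi o1 : o1 \in outcomes p e psi ->
  exists2 o, o \in outcomes p e psi & fwc p f e psi = marg p f e psi o.
Proof.
move=> ho; rewrite /fwc; case: pickP; last by move=> H; move: (H o1); rewrite ho. move=> o0 Ho0.
elim/big_ind: _ => //; first by exists o0.
  by move=> x y [ox Hx ->] [oy Hy ->]; rewrite /Num.min; case: ifP => _; [exists ox|exists oy].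
by move=> o Ho; exists o.
Qed.

Lemma dom_extend (psi : {ffun E -> option O}) e o : dom (extend psi e o) = e |: dom psi.
Proof.
by apply/setP => x; rewrite /extend !inE ffunE; case: (x == e).
Qed.

Lemma consistent_extend phi psi e : consistent phi psi ->
  consistent phi (extend psi e (phi e)).
Proof.
move=> /forallP c; apply/forallP => x; rewrite /extend !ffunE.
by case: (x =P e) => [->|_]; [rewrite eqxx orbT|exact: c].
Qed.


Definition restr phi S : {ffun E -> option O} :=
  [ffun x => if x \in S then Some (phi x) else None].

Lemma dom_restr phi S : dom (restr phi S) = S.
Proof. by apply/setP => x; rewrite /restr !inE ffunE; case: (x \in S). Qed.

Lemma consistent_restr phi S : consistent phi (restr phi S).
Proof. by apply/forallP => x; rewrite /restr ffunE; case: (x \in S); rewrite ?eqxx ?orbT. Qed.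

Lemma extend_restr phi S e : extend (restr phi S) e (phi e) = restr phi (e |: S).
Proof.
apply/ffunP => x; rewrite /extend /restr !ffunE !inE.
by case: (x =P e) => [->|].
Qed.

Lemma fpart_md phi psi : 0 < p phi -> consistent phi psi ->
  fpart p f (dom psi) psi = f (dom psi) phi.
Proof. by move=> hp c; apply: md => //; apply: prob_gt0 hp c. Qed.

Lemma f_step phi S e : 0 < p phi -> e \notin S -> f S phi <= f (e |: S) phi.
Proof.
move=> hp eS.
have c := consistent_restr phi S.
have pr := prob_gt0 hp c.
have h0 := mono pr; rewrite dom_restr in h0; have {}h0 := h0 e eS.
have h1 := fwc_le (outcomes_mem e hp c).
move: h1; rewrite /marg dom_restr extend_restr.
have := fpart_md hp (consistent_restr phi (e |: S)); rewrite dom_restr => ->.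
have := fpart_md hp c; rewrite dom_restr => ->.
move=> h1; have := le_trans h0 h1; by rewrite subr_ge0.
Qed.

Lemma f_mono phi S T : 0 < p phi -> S \subset T -> f S phi <= f T phi.
Proof.
move=> hp; move: {2}(#|T :\: S|) (erefl #|T :\: S|) => n.
elim: n S => [|n IH] S hn sST.
  have /eqP : T :\: S = set0 by apply/eqP; rewrite -cards_eq0 hn.
  rewrite setD_eq0 => sTS.
  by have -> : S = T by apply/eqP; rewrite eqEsubset sST sTS.
have /set0Pn [e] : T :\: S != set0 by rewrite -card_gt0 hn.
rewrite inE => /andP [eS eT].
apply: le_trans (f_step hp eS) _; apply: IH; last by rewrite subUset sub1set eT sST.
have := cardsD1 e (T :\: S); rewrite hn !inE eS eT /= add1n => -[->].
by apply: eq_card => x; rewrite !inE negb_or; case: (x == e); case: (x \in S); case: (x \in T).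
Qed.


Lemma prob_witness psi : 0 < prob p psi -> exists phi, 0 < p phi /\ consistent phi psi.
Proof.
case: (boolP [exists phi, (0 < p phi) && consistent phi psi]).
  by case/existsP => phi /andP[h1 h2]; exists phi.
move/existsPn => H; rewrite /prob big1 ?ltxx // => phi c.
have := H phi; rewrite c andbT; move: (p_ge0 phi); rewrite le_eqVlt.
by case/orP => [/eqP <-|->].
Qed.

Lemma min_Uplus_le (g : {ffun E -> O} -> R) phi : phi \in Uplus p -> min_Uplus p g <= g phi.
Proof.
move=> hphi; rewrite /min_Uplus; case: pickP; last by move=> H; move: (H phi); rewrite hphi.
by move=> phi0 _; apply: bigmin_le_cond.
Qed.

Lemma min_Uplus_ge (g : {ffun E -> O} -> R) x : (exists phi, phi \in Uplus p) ->
  (forall phi, phi \in Uplus p -> x <= g phi) -> x <= min_Uplus p g.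
Proof.
move=> [phi1 h1] H; rewrite /min_Uplus; case: pickP; last by move=> H'; move: (H' phi1); rewrite h1.
by move=> phi0 h0; apply: le_bigmin => //; apply: H.
Qed.

Lemma subpart_refl psi : subpart psi psi.
Proof. by apply/forallP => x; rewrite eqxx orbT. Qed.

Lemma subpart_trans psi1 psi2 psi3 : subpart psi1 psi2 -> subpart psi2 psi3 -> subpart psi1 psi3.
Proof.
move=> /forallP h1 /forallP h2; apply/forallP => x.
move: (h1 x) (h2 x); case: (psi1 x) => [a1 | ] //=; case: (psi2 x) => [a2 | ] //=.
by move=> /eqP -> .
Qed.

Lemma subpart_consistent phi psi1 psi2 : subpart psi1 psi2 -> consistent phi psi2 ->
  consistent phi psi1.
Proof.
move=> /forallP h1 /forallP h2; apply/forallP => x.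
move: (h1 x) (h2 x); case: (psi1 x) => [a1 | ] //=; case: (psi2 x) => [a2 | ] //=.
by move=> /eqP ->.
Qed.

Lemma subpart_extend psi e o : psi e = None -> subpart psi (extend psi e o).
Proof.
move=> he; apply/forallP => x; rewrite /extend ffunE.
by case: (x =P e) => [->|_]; rewrite ?he ?eqxx ?orbT.
Qed.

Lemma in_dom psi e : (e \in dom psi) = (psi e != None).
Proof. by rewrite inE. Qed.

Section Adv.
Variable pi : policy E O.
Variable psi0 : {ffun E -> option O}.
Hypothesis pr0 : 0 < prob p psi0.

Definition advstep (st : {ffun E -> option O} * {ffun E -> option O}) :=
  let q := st.1 in let J := st.2 in
  match pi q with
  | Some e => if q e == None then
       match J e with
       | Some o => (extend q e o, J)
       | None =>
         match [pick o | (o \in outcomes p e J) && (marg p f e J o == fwc p f e J)] with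
         | Some o => (extend q e o, extend J e o)
         | None => st
         end
       end
     else st
  | None => st
  end.

Definition Inv (st : {ffun E -> option O} * {ffun E -> option O}) :=
  [/\ 0 < prob p st.2, subpart psi0 st.2, subpart st.1 st.2,
      dom st.2 = dom psi0 :|: dom st.1 &
      fpart p f (dom st.2) st.2 <=
        fpart p f (dom psi0) psi0 + \sum_(e in dom st.1 :\: dom psi0) fwc p f e psi0].

Lemma pick_some J e : 0 < prob p J ->
  exists o, [pick o | (o \in outcomes p e J) && (marg p f e J o == fwc p f e J)] = Some o.
Proof.
move=> hJ; have [phi [hp c]] := prob_witness hJ.
have [ob ho he] := fwc_attained (outcomes_mem e hp c).
case: pickP => [ob' _|H]; first by exists ob'.
by move: (H ob); rewrite ho he eqxx.
Qed.

Lemma Inv_step st : Inv st -> Inv (advstep st) /\ subpart st.2 (advstep st).2.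
Proof.
case: st => q J [hJ sp0 sq hd hf] /=; rewrite /advstep /=.
case hpi: (pi q) => [e | ]; last by split => //; apply: subpart_refl.
case: ifP => hqe; last by split => //; apply: subpart_refl.
move/eqP: hqe => hqe.
case hJe: (J e) => [a2 | ].
  have eJ : e \in dom J by rewrite in_dom hJe.
  have eq0 : e \notin dom q by rewrite in_dom hqe eqxx.
  have e0 : e \in dom psi0 by move: eJ; rewrite hd inE (negbTE eq0) orbF.
  split; last exact: subpart_refl.
  split => //=.
  - apply/forallP => x; rewrite /extend ffunE; case: (x =P e) => [->|_]; first by rewrite hJe eqxx orbT.
    by move/forallP: sq => /(_ x).
  - rewrite dom_extend hd; apply/setP => x; rewrite !in_setU !in_set1.
    by case: (x =P e) => [->|_]; rewrite ?e0 //.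
  - rewrite dom_extend; apply: le_trans hf _.
    have -> : (e |: dom q) :\: dom psi0 = dom q :\: dom psi0.
      by apply/setP => x; rewrite !in_setD !in_setU !in_set1; case: (x =P e) => [->|_]; rewrite ?e0 ?andbF.
    by [].
have [ob ho] := pick_some e hJ; rewrite ho.
move: ho; case: pickP => // o /andP [hout hmarg] [eo]; subst ob.
have eJ : e \notin dom J by rewrite in_dom hJe eqxx.
have e0 : e \notin dom psi0 by move: eJ; rewrite hd inE negb_or => /andP[].
have eq0 : e \notin dom q by rewrite in_dom hqe eqxx.
have psi0e : psi0 e = None.
  by move/forallP: sp0 => /(_ e); rewrite hJe; case: (psi0 e).
split; last exact: subpart_extend.
split => /=.
- move: hout; rewrite inE => /existsP [phi /and3P [hp c /eqP hpe]].
  apply: (prob_gt0 hp); rewrite -hpe; exact: consistent_extend.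
- exact: subpart_trans sp0 (subpart_extend _ hJe).
- apply/forallP => y; rewrite /extend !ffunE; have [_|_] := eqVneq y e; first by rewrite eqxx orbT.
  by move/forallP: sq => /(_ y).
- rewrite !dom_extend hd; apply/setP => x; rewrite !in_setU !in_set1.
  by case: (x == e); rewrite ?orbT.
- have -> : dom (extend q e o) :\: dom psi0 = e |: (dom q :\: dom psi0).
    rewrite dom_extend; apply/setP => x; rewrite !in_setD !in_setU !in_set1; case: (boolP (x == e)) => [/eqP -> | _] /=; rewrite ?(negbTE e0) ?in_setD //.
  rewrite big_setU1 /=; last by rewrite in_setD (negbTE eq0) andbF.
  have hm : fpart p f (dom (extend J e o)) (extend J e o) = fpart p f (dom J) J + fwc p f e J.
    by rewrite dom_extend; move: hmarg => /= /eqP <-; rewrite /marg addrC subrK.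
  rewrite hm [fwc p f e psi0 + _]addrC addrA; apply: lerD => //.
  exact: (subm pr0 hJ sp0 eJ).
Qed.


Definition st0 := ([ffun=> None] : {ffun E -> option O}, psi0).

Lemma dom_none : dom ([ffun=> None] : {ffun E -> option O}) = set0.
Proof. by apply/setP => x; rewrite !inE ffunE. Qed.

Lemma Inv0 : Inv st0.
Proof.
split => //=.
- exact: subpart_refl.
- by apply/forallP => x; rewrite ffunE.
- by rewrite dom_none setU0.
- by rewrite dom_none set0D big_set0 addr0.
Qed.

Lemma Inv_iter j : Inv (iter j advstep st0).
Proof. by elim: j => [|j IH]; [exact: Inv0|rewrite iterS; case: (Inv_step IH)]. Qed.

Lemma sub_iter j d : subpart (iter j advstep st0).2 (iter (d + j) advstep st0).2.
Proof.
elim: d => [|d IH]; first exact: subpart_refl.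
rewrite addSn iterS; apply: subpart_trans IH _.
by case: (Inv_step (Inv_iter (d + j))).
Qed.

Lemma step_eq st phi : Inv st -> consistent phi (advstep st).2 ->
  (advstep st).1 = pstep pi phi st.1.
Proof.
case: st => q J [hJ _ _ _ _] /=; rewrite /advstep /pstep /=.
case hpi: (pi q) => [e | ] //.
case: ifP => // /eqP hqe.
case hJe: (J e) => [a2 | ] /=.
  by move/forallP => /(_ e); rewrite hJe /= => /eqP [->].
have [ob ho] := pick_some e hJ; rewrite ho /=.
by move/forallP => /(_ e); rewrite /extend ffunE eqxx /= => /eqP [->].
Qed.

Lemma run_eq phi j : (j <= #|E|)%N -> consistent phi (iter #|E| advstep st0).2 ->
  (iter j advstep st0).1 = iter j (pstep pi phi) [ffun=> None].
Proof.
move=> + c; elim: j => [|j IH] hj //.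
rewrite !iterS -IH ?(ltnW hj) //; apply: step_eq; first exact: Inv_iter.
rewrite -iterS; apply: subpart_consistent c.
have := sub_iter j.+1 (#|E| - j.+1); by rewrite subnK.
Qed.

Lemma adv k : (forall phi, 0 < p phi -> (#|sel_items pi phi| <= k)%N) ->
  exists A, [/\ A \subset ~: dom psi0, (#|A| <= k)%N &
    fwc_policy p f pi <= fpart p f (dom psi0) psi0 + \sum_(e in A) fwc p f e psi0].
Proof.
move=> hk.
have [hJ sp0 sq hd hf] := Inv_iter #|E|.
have [phi [hp c]] := prob_witness hJ.
have hrun : run pi phi = (iter #|E| advstep st0).1 by rewrite /run -(run_eq (leqnn _) c).
exists (dom (iter #|E| advstep st0).1 :\: dom psi0); split.
- by apply/fintype.subsetP => x; rewrite in_setD in_setC => /andP[].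
- apply: leq_trans (hk phi hp); rewrite /sel_items hrun; apply: subset_leq_card; exact: subsetDl.
- apply: le_trans hf.
  have hU : phi \in Uplus p by rewrite inE.
  apply: le_trans (min_Uplus_le _ hU) _.
  rewrite /sel_items hrun (fpart_md hp c); apply: f_mono hp _.
  by rewrite hd; exact: subsetUr.
Qed.

End Adv.

Section Main.
Variable sel : {ffun E -> option O} -> {set E} -> E.
Variables (k : nat) (eps : R).
Hypothesis k0 : (0 < k)%N.
Hypothesis kn : (k <= #|E|)%N.
Hypothesis e0 : 0 < eps.
Hypothesis e1 : eps < 1.
Hypothesis selP : wc_argmax_rule p f sel.
Variable F : R.
Hypothesis hF : forall psi, 0 < prob p psi -> exists A, [/\ A \subset ~: dom psi, (#|A| <= k)%N &
   F <= fpart p f (dom psi) psi + \sum_(e in A) fwc p f e psi].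
Variable phi : {ffun E -> O}.
Hypothesis hp : 0 < p phi.

Local Notation s := (sample_size E k eps).
Local Notation cc := ((1 - eps) / k%:R).

Lemma cc_ge0 : 0 <= cc.
Proof. have e1' := e1; apply: divr_ge0; [lra | exact: ler0n]. Qed.

Lemma greedy_step psi t : consistent phi psi -> #|dom psi| = t.-1 -> (0 < t)%N -> (t <= k)%N ->
  [/\ (0 < #|candidates psi (minn s (#|E| + 1 - t))|)%N,
      forall H, H \in candidates psi (minn s (#|E| + 1 - t)) ->
        sel psi H \notin dom psi /\
        f (dom psi) phi + fwc p f (sel psi H) psi <= f (sel psi H |: dom psi) phi &
      cc * (F - f (dom psi) phi) <= (#|candidates psi (minn s (#|E| + 1 - t))|%:R)^-1 *
         \sum_(H in candidates psi (minn s (#|E| + 1 - t))) fwc p f (sel psi H) psi].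
Proof.
move=> cons hd t0 tk.
have pr := prob_gt0 hp cons.
set m := #|~: dom psi|.
have hC := cardsC (dom psi); rewrite hd -/m in hC.
have hm : (#|E| + 1 - t = m)%N by lia.
have m0 : (0 < m)%N by lia.
have mn : (m <= #|E|)%N by lia.
rewrite hm.
have s0 : (0 < s)%N := ss_gt0 k0 kn e0 e1.
set h := minn s m.
have h0 : (0 < h)%N by rewrite leq_min s0 m0.
have hm' : (h <= m)%N by rewrite geq_minr.
set Hs := candidates psi h.
have cHs : #|Hs| = 'C(m, h) by rewrite /Hs /candidates cards_draws.
have N0 : (0 < #|Hs|)%N by rewrite cHs bin_gt0.
have hH : forall H, H \in Hs -> [/\ sel psi H \in H, sel psi H \notin dom psi,
      (forall e, e \in H -> fwc p f e psi <= fwc p f (sel psi H) psi) &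
      f (dom psi) phi + fwc p f (sel psi H) psi <= f (sel psi H |: dom psi) phi].
  move=> H; rewrite inE => /andP [sub /eqP cH].
  have Hpos : (0 < #|H|)%N by rewrite cH.
  have [sH smax] := selP pr Hpos.
  have sn : sel psi H \notin dom psi.
    by have := fintype.subsetP sub _ sH; rewrite in_setC.
  split => //.
  have := fwc_le (outcomes_mem (sel psi H) hp cons).
  rewrite /marg (fpart_md hp cons).
  have := fpart_md hp (consistent_extend (sel psi H) cons); rewrite dom_extend => ->.
  by move=> h1; rewrite -lerBrDl.
split => //.
  by move=> H /hH [].
have [A [sA cA hFA]] := hF pr.
rewrite (fpart_md hp cons) in hFA.
set g := fun e => fwc p f e psi.
have g0 : forall e, e \in A -> 0 <= g e.
  by move=> e eA; apply: mono => //; have := fintype.subsetP sA _ eA; rewrite in_setC.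
have cntH : forall B, B \subset A -> cc * #|B|%:R * #|Hs|%:R <= (cnt Hs B)%:R.
  move=> B sB.
  have sBD : B \subset ~: dom psi by apply: subset_trans sB sA.
  rewrite /cnt /Hs /candidates cnt_cand // -/m -cHs.
  case: (posnP #|B|) => [->|i0]; first by rewrite mulr0 mul0r subn0 cHs subrr.
  rewrite cHs /h; apply: prob_bound => //.
  - by apply: leq_trans (subset_leq_card sB) cA.
  - by rewrite /m; apply: subset_leq_card.
  - by rewrite e0 ltW.
  - by move=> km _; apply: pow_bound.
have hML := ML (erefl #|A|) cntH g0.
have hmx : \sum_(H in Hs) mx g A H <= \sum_(H in Hs) g (sel psi H).
  apply: ler_sum => H HH; have [sH sn smax _] := hH H HH.
  apply: bigmax_le; first by apply: mono.
  by move=> e; rewrite in_setI => /andP [eH _]; apply: smax.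
have NR : 0 < #|Hs|%:R :> R by rewrite ltr0n.
rewrite ler_pdivlMl // mulrA.
apply: le_trans (le_trans hML hmx).
set N := (#|Hs|%:R : R); set S := \sum_(e in A) g e; set fd := f (dom psi) phi.
set cc' := cc.
have hc := cc_ge0.
rewrite [N * cc']mulrC -[cc' * N * (F - fd)]mulrA -[cc' * N * S]mulrA.
apply: ler_wpM2l => //; apply: ler_wpM2l; first exact: ltW.
by rewrite lerBlDl.
Qed.

Lemma cc_le1 : cc <= 1.
Proof.
have e0' := e0.
have kR : 0 < k%:R :> R by rewrite ltr0n.
rewrite ler_pdivrMr // mul1r; apply: (@le_trans _ _ 1); last by rewrite ler1n.
by rewrite lerBlDr lerDl ltW.
Qed.

Lemma greedy_rec r : forall t psi, consistent phi psi -> #|dom psi| = t.-1 -> (0 < t)%N ->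
  (r + t <= k.+1)%N ->
  F - (1 - cc) ^+ r * (F - f (dom psi) phi) <= greedy_val f sel s phi r t psi.
Proof.
have hc := cc_ge0.
have c0 : 0 <= 1 - cc by rewrite subr_ge0; exact: cc_le1.
elim: r => [|r IH] t psi cons hd t0 hrt.
  by rewrite /= expr0 mul1r opprB addrC subrK.
have tk : (t <= k)%N by lia.
have [N0 hH hcc] := greedy_step cons hd t0 tk.
rewrite [greedy_val _ _ _ _ _ _ _]/=.
set Hs := candidates psi _ in N0 hH hcc *.
set cr := (1 - cc) ^+ r.
have cr0 : 0 <= cr by apply: exprn_ge0.
set a := F - cr * (F - f (dom psi) phi).
have low : forall H, H \in Hs -> a + cr * fwc p f (sel psi H) psi <=
    greedy_val f sel s phi r t.+1 (extend psi (sel psi H) (phi (sel psi H))).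
  move=> H HH; have [sn hf] := hH H HH.
  have hdom : #|dom (extend psi (sel psi H) (phi (sel psi H)))| = t.+1.-1.
    by rewrite dom_extend cardsU1 sn hd add1n prednK.
  have hr' : (r + t.+1 <= k.+1)%N by rewrite addnS.
  apply: le_trans (IH t.+1 _ (consistent_extend _ cons) hdom (ltn0Sn _) hr').
  rewrite dom_extend /a.
  have := ler_wpM2l cr0 hf; rewrite -/cr; lra.
have sumle : \sum_(H in Hs) (a + cr * fwc p f (sel psi H) psi) <=
    \sum_(H in Hs) greedy_val f sel s phi r t.+1 (extend psi (sel psi H) (phi (sel psi H))).
  by apply: ler_sum.
have NR : 0 < #|Hs|%:R :> R by rewrite ltr0n.
have Ni : 0 <= (#|Hs|%:R)^-1 :> R by rewrite invr_ge0 ltW.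
apply: le_trans (ler_wpM2l Ni sumle).
rewrite big_split /= sumr_const -big_distrr /=.
set S := \sum_(i in Hs) _.
have eqR : (#|Hs|%:R)^-1 * (a *+ #|Hs| + cr * S) = a + cr * ((#|Hs|%:R)^-1 * S).
  by rewrite mulrDr -[a *+ _]mulr_natr [_^-1 * (a * _)]mulrCA mulVf ?gt_eqF // mulr1 [_^-1 * (cr * _)]mulrCA.
rewrite eqR.
have := ler_wpM2l cr0 hcc; rewrite -/S.
rewrite /a exprS -/cr.
move=> h; nra.
Qed.

End Main.

End Basics.

Unset Implicit Arguments.
Set Strict Implicit.

Theorem theorem3 (R : realType) (E O : finType)
    (p : {ffun E -> O} -> R) (f : {set E} -> {ffun E -> O} -> R)
    (k : nat) (eps : R) (sel : {ffun E -> option O} -> {set E} -> E) :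
  (forall phi, 0 <= p phi) -> \sum_phi p phi = 1 ->
  (forall S phi, 0 <= f S phi) ->
  (0 < k)%N -> (k <= #|E|)%N -> 0 < eps < 1 ->
  wc_monotone p f -> wc_submodular p f -> minimal_dependency p f ->
  wc_argmax_rule p f sel ->
  (forall pi : policy E O, (forall phi, 0 < p phi -> (#|sel_items pi phi| <= k)%N) ->
     (1 - expR (-1) - eps) * fwc_policy p f pi <= greedy_fwc p f sel k eps)
  /\ (greedy_evals E k eps)%:R <= #|E|%:R * ln (eps^-1) + k%:R.
Proof.
move=> p0 psum f0 k0 kn /andP[e0 e1] mono subm md selP.
split.
  move=> pi hk.
  set F := fwc_policy p f pi.
  have F0 : 0 <= F.
    rewrite /F /fwc_policy /min_Uplus; case: pickP => // phi0 _.
    by apply: le_bigmin => // phi1 _; apply: f0.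
  have hF := fun psi pr => adv p0 mono subm md (pi := pi) (psi0 := psi) pr hk.
  have Ex : exists phi, phi \in Uplus p.
    have pr1 : 0 < prob p ([ffun=> None] : {ffun E -> option O}).
      rewrite /prob (eq_bigl (fun _ => true)) ?psum ?ltr01 // => phi.
      by apply/forallP => x; rewrite ffunE.
    by have [phi [hp _]] := prob_witness p0 pr1; exists phi; rewrite inE.
  rewrite /greedy_fwc; apply: min_Uplus_ge => // phi; rewrite inE => hp.
  have hr := greedy_rec p0 mono md k0 kn e0 e1 selP hF hp (r := k) (t := 1)
      (psi := [ffun=> None]).
  have hd : #|dom ([ffun=> None] : {ffun E -> option O})| = 0%N by rewrite dom_none cards0.
  have := hr (ltac:(by apply/forallP => x; rewrite ffunE)) hd (ltn0Sn _) (ltac:(by rewrite addn1)).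
  apply: le_trans.
  rewrite dom_none.
  have fb := final_bound k0 e0 e1.
  set c := (1 - (1 - eps) / k%:R) ^+ k in fb *.
  have c0 : 0 <= c.
    apply: exprn_ge0; rewrite subr_ge0.
    have kR : 0 < k%:R :> R by rewrite ltr0n.
    rewrite ler_pdivrMr // mul1r; apply: (@le_trans _ _ 1); last by rewrite ler1n.
    by rewrite lerBlDr lerDl ltW.
  have := f0 set0 phi; set g := f set0 phi => g0.
  have h1 := ler_wpM2r F0 fb.
  have h2 := mulr_ge0 c0 g0.
  rewrite -/F; nra.
have s0 := ss_gt0 k0 kn e0 e1.
have hle : (greedy_evals E k eps <= k * sample_size E k eps)%N.
  rewrite /greedy_evals.
  apply: (@leq_trans (\sum_(1 <= t < k.+1) sample_size E k eps)).
    by apply: leq_sum => t _; apply: geq_minl.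
  by rewrite sum_nat_const_nat subn1.
apply: le_trans (_ : (k * sample_size E k eps)%:R <= _); first by rewrite ler_nat.
have lt := ss_lt k0 kn e0 e1.
rewrite natrM.
have kR : 0 < k%:R :> R by rewrite ltr0n.
have := ltW lt; rewrite /xs /L => h.
have := ler_wpM2l (ltW kR) h.
have -> : k%:R * (#|E|%:R / k%:R * ln eps^-1 + 1) = #|E|%:R * ln eps^-1 + k%:R.
  by field; rewrite gt_eqF.
by [].
Qed.
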